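(* Let $\mathcal{Z}\subseteq\mathbb{R}^d$ be a nonempty compact convex set, let $r:\mathcal{Z}\to\mathbb{R}$ be convex and differentiable on $\mathcal{Z}$, and let $\Theta\ge \max_{z\in\mathcal{Z}} r(z)-\min_{z\in\mathcal{Z}} r(z)$. Let $g:\mathcal{Z}\to\mathbb{R}^d$ and let $z^\star\in\mathcal{Z}$ satisfy $\langle g(z^\star), z^\star-z\rangle\le 0$ for all $z\in\mathcal{Z}$. Let $\nu>0$, $\alpha>0$, $\varepsilon\ge 0$ and $K\in\mathbb{N}$. Suppose $g$ is $\nu$-strongly monotone with respect to $r$, i.e. $\langle g(w)-g(z),w-z\rangle\ge \nu\langle \nabla r(w)-\nabla r(z),w-z\rangle$ for all $w,z\in\mathcal{Z}$. Let $z_0\in\operatorname{argmin}_{z\in\mathcal{Z}} r(z)$, and for $k=1,\dots,K$ let $z_{k-1/2},z_k\in\mathcal{Z}$ be any points satisfying, for all $w\in\mathcal{Z}$, $$\big\langle g(z_{k-1})+\alpha\big(\nabla r(z_{k-1/2})-\nabla r(z_{k-1})\big),\, z_{k-1/2}-w\big\rangle\le \tfrac{\varepsilon}{2},$$ $$\big\langle g(z_{k-1/2})+\alpha\big(\nabla r(z_{k})-\nabla r(z_{k-1})\big)+\nu\big(\nabla r(z_{k})-\nabla r(z_{k-1/2})\big),\, z_{k}-w\big\rangle\le \tfrac{\varepsilon}{2}.$$ Suppose moreover that for every $k\in[K]$ the relative Lipschitz condition $$\langle g(z_{k-1/2})-g(z_{k-1}),\,z_{k-1/2}-z_k\rangle\le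 \alpha\big(V_{z_{k-1/2}}(z_k)+V_{z_{k-1}}(z_{k-1/2})\big)$$ holds. Then $$V_{z_K}(z^\star)\le \Big(\frac{\alpha}{\nu+\alpha}\Big)^K\Theta+\frac{\varepsilon}{\nu}.$$
   Context: For a differentiable convex function $r$, its Bregman divergence is $V_{z'}(z):=V^r_{z'}(z)=r(z)-r(z')-\langle\nabla r(z'),z-z'\rangle\ge 0$. The two displayed conditions say that $z_{k-1/2}$ (resp. $z_k$) is an $\frac{\varepsilon}{2}$-approximate solution of $\min_{z\in\mathcal{Z}}\{\langle g(z_{k-1}),z\rangle+\alpha V_{z_{k-1}}(z)\}$ (resp. $\min_{z\in\mathcal{Z}}\{\langle g(z_{k-1/2}),z\rangle+\alpha V_{z_{k-1}}(z)+\nu V_{z_{k-1/2}}(z)\}$), where $z'$ is an $\varepsilon$-approximate solution of $\min_{\mathcal{Z}} F$ if $\langle\nabla F(z'),z'-w\rangle\le\varepsilon$ for all $w\in\mathcal{Z}$. *)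

(* Defs.v *)
From HB Require Import structures.
From mathcomp Require Import all_boot all_order all_algebra.
From mathcomp Require Import all_classical all_reals all_analysis.
Set Implicit Arguments. Unset Strict Implicit. Unset Printing Implicit Defensive.
Import Order.TTheory GRing.Theory Num.Theory.
Import numFieldNormedType.Exports.
Local Open Scope classical_set_scope.
Local Open Scope ring_scope.

Definition dotp {R : realType} {d : nat} (u v : 'rV[R]_d) : R :=
  \sum_(i < d) u ord0 i * v ord0 i.

Definition convex_on {R : realType} {d : nat} (Z : set 'rV[R]_d)
  (r : 'rV[R]_d -> R) : Prop :=
  forall x y, Z x -> Z y -> forall t : R, 0 <= t <= 1 ->
    r (t *: x + (1 - t) *: y) <= t * r x + (1 - t) * r y.

Definition gradient_on {R : realType} {d : nat} (Z : set 'rV[R]_d)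
  (r : 'rV[R]_d -> R) (gr : 'rV[R]_d -> 'rV[R]_d) : Prop :=
  forall z, Z z -> differentiable r z /\ forall h, 'd r z h = dotp (gr z) h.

(* Bregman divergence V_{z'}(z) = r z - r z' - <grad r z', z - z'>. *)
Definition breg {R : realType} {d : nat} (r : 'rV[R]_d -> R)
  (gr : 'rV[R]_d -> 'rV[R]_d) (z' z : 'rV[R]_d) : R :=
  r z - r z' - dotp (gr z') (z - z').

(* Main.v *)
Require Import Defs.
From HB Require Import structures.
From mathcomp Require Import all_boot all_order all_algebra.
From mathcomp Require Import all_classical all_reals all_analysis.
From mathcomp Require Import ring lra.
Import Order.TTheory GRing.Theory Num.Theory.
Import numFieldNormedType.Exports.
Local Open Scope classical_set_scope.
Local Open Scope ring_scope.

Lemma dir_le (R : realType) (d : nat) (f : 'rV[R]_d -> R) x v c :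
  differentiable f x ->
  (forall t : R, 0 < t -> t <= 1 -> t^-1 * (f (t *: v + x) - f x) <= c) ->
  'd f x v <= c.
Proof.
move=> Hd Hb; rewrite -deriveE //.
have Hder := @diff_derivable _ _ _ f x v Hd.
set q := (fun h : R => h^-1 *: ((f \o shift x) (h *: v) - f x)).
have Hq : q @ 0^' --> 'D_v f x by exact: Hder.
rewrite leNgt; apply/negP => Hlt.
have H1 : nbhs (0:R) (fun t => t != 0 -> c < q t) := @cvgr_gt _ _ _ (dnbhs_filter 0) _ _ Hq _ Hlt.
have H2 : \forall t \near 0^'+, c < q t.
  move/nbhs_ballP: H1 => [e e0 He].
  by exists e => //= y ye /gt_eqF/negbT/He; exact.
have H3 : \forall t \near 0^'+, [/\ 0 < t, t <= 1 & c < q t].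
  near=> t; split.
  - by near: t; exact: nbhs_right_gt.
  - by near: t; apply: nbhs_right_le; exact: ltr01.
  - by near: t; exact: H2.
have [t [t0 t1 ct]] := filter_ex H3.
have := Hb t t0 t1; rewrite leNgt => /negP; apply.
by move: ct; rewrite /q /=.
Unshelve. all: by end_near.

Qed.

Lemma dir_ge (R : realType) (d : nat) (f : 'rV[R]_d -> R) x v c :
  differentiable f x ->
  (forall t : R, 0 < t -> t <= 1 -> c <= t^-1 * (f (t *: v + x) - f x)) ->
  c <= 'd f x v.
Proof.
move=> Hd Hb; rewrite -deriveE //.
have Hder := @diff_derivable _ _ _ f x v Hd.
set q := (fun h : R => h^-1 *: ((f \o shift x) (h *: v) - f x)).
have Hq : q @ 0^' --> 'D_v f x by exact: Hder.
rewrite leNgt; apply/negP => Hlt.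
have H1 : nbhs (0:R) (fun t => t != 0 -> q t < c) := @cvgr_lt _ _ _ (dnbhs_filter 0) _ _ Hq _ Hlt.
have H2 : \forall t \near 0^'+, q t < c.
  move/nbhs_ballP: H1 => [e e0 He].
  by exists e => //= y ye /gt_eqF/negbT/He; exact.
have H3 : \forall t \near 0^'+, [/\ 0 < t, t <= 1 & q t < c].
  near=> t; split.
  - by near: t; exact: nbhs_right_gt.
  - by near: t; apply: nbhs_right_le; exact: ltr01.
  - by near: t; exact: H2.
have [t [t0 t1 ct]] := filter_ex H3.
have := Hb t t0 t1; rewrite leNgt => /negP; apply.
by move: ct; rewrite /q /=.
Unshelve. all: by end_near.
Qed.

Section Dotp.
Variables (R : realType) (d : nat).
Implicit Types u v w : 'rV[R]_d.
Lemma dotpDl u v w : dotp (u + v) w = dotp u w + dotp v w.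
Proof. by rewrite /dotp -big_split; apply: eq_bigr => i _; rewrite mxE mulrDl. Qed.
Lemma dotpDr u v w : dotp w (u + v) = dotp w u + dotp w v.
Proof. by rewrite /dotp -big_split; apply: eq_bigr => i _; rewrite mxE mulrDr. Qed.
Lemma dotpNl u w : dotp (- u) w = - dotp u w.
Proof. by rewrite /dotp -sumrN; apply: eq_bigr => i _; rewrite mxE mulNr. Qed.
Lemma dotpNr u w : dotp w (- u) = - dotp w u.
Proof. by rewrite /dotp -sumrN; apply: eq_bigr => i _; rewrite mxE mulrN. Qed.
Lemma dotpZl (a : R) u w : dotp (a *: u) w = a * dotp u w.
Proof. by rewrite /dotp mulr_sumr; apply: eq_bigr => i _; rewrite mxE mulrA. Qed.
Lemma dotpZr (a : R) u w : dotp w (a *: u) = a * dotp w u.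
Proof. by rewrite /dotp mulr_sumr; apply: eq_bigr => i _; rewrite mxE mulrCA. Qed.
End Dotp.

Definition dotpE := (dotpDl, dotpDr, dotpNl, dotpNr, dotpZl, dotpZr).

Lemma step_ineq (R : realType) (d : nat) (r : 'rV[R]_d -> R) (gr g : 'rV[R]_d -> 'rV[R]_d)
  (nu alpha eps : R) (a h b s : 'rV[R]_d) :
  dotp (g a + alpha *: (gr h - gr a)) (h - b) <= eps / 2 ->
  dotp (g h + alpha *: (gr b - gr a) + nu *: (gr b - gr h)) (b - s) <= eps / 2 ->
  dotp (g h - g a) (h - b) <= alpha * (breg r gr h b + breg r gr a h) ->
  nu * dotp (gr h - gr s) (h - s) <= dotp (g h - g s) (h - s) ->
  dotp (g s) (s - h) <= 0 ->
  0 <= nu * breg r gr s h -> 0 <= nu * breg r gr h b ->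
  (alpha + nu) * breg r gr b s <= alpha * breg r gr a s + eps.
Proof.
rewrite /breg !dotpE => H1 H2 H3 H4 H5 H6 H7.
lra.
Qed.

Lemma comb_eq (R : realType) (d : nat) (t : R) (x y : 'rV[R]_d) :
  t *: (y - x) + x = t *: y + (1 - t) *: x.
Proof. by rewrite scalerBr scalerBl scale1r -addrA [_ + x]addrC. Qed.

Lemma breg_ge0 (R : realType) (d : nat) (Z : set 'rV[R]_d) r gr x y :
  convex_on Z r -> gradient_on Z r gr -> Z x -> Z y -> 0 <= breg r gr x y.
Proof.
move=> Hc Hg Zx Zy; have [Hd Hgr] := Hg x Zx.
rewrite /breg -Hgr subr_ge0.
apply: dir_le => // t t0 t1.
rewrite comb_eq.
have := Hc y x Zy Zx t; rewrite (ltW t0) t1 => /(_ isT) Hr.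
have -> : r y - r x = t^-1 * (t * (r y - r x)) by rewrite mulKf ?gt_eqF.
apply: ler_wpM2l; first by rewrite invr_ge0 ltW.
lra.
Qed.

Lemma opt_ge0 (R : realType) (d : nat) (Z : set 'rV[R]_d) r gr z0 w :
  convex_set Z -> gradient_on Z r gr -> Z z0 -> (forall w, Z w -> r z0 <= r w) ->
  Z w -> 0 <= dotp (gr z0) (w - z0).
Proof.
move=> Hc Hg Zz Hmin Zw; have [Hd Hgr] := Hg z0 Zz.
rewrite -Hgr; apply: dir_ge => // t t0 t1.
apply: mulr_ge0; first by rewrite invr_ge0 ltW.
rewrite subr_ge0; apply: Hmin.
have := Hc w z0 (Itv01 (ltW t0) t1).
rewrite !inE => /(_ Zw Zz).
by rewrite comb_eq.
Qed.
Arguments opt_ge0 {R d Z r gr z0 w}.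
Arguments breg_ge0 {R d Z r gr x y}.
Arguments step_ineq {R d r gr g nu alpha eps a h b s}.

Theorem mainTheorem1 (R : realType) (d : nat) (Z : set 'rV[R]_d)
  (r : 'rV[R]_d -> R) (gr : 'rV[R]_d -> 'rV[R]_d) (Theta : R)
  (g : 'rV[R]_d -> 'rV[R]_d) (zstar : 'rV[R]_d)
  (nu alpha eps : R) (K : nat) (zh z : nat -> 'rV[R]_d) :
  Z !=set0 -> compact Z -> convex_set Z ->
  convex_on Z r -> gradient_on Z r gr ->
  (forall u v, Z u -> Z v -> r u - r v <= Theta) ->
  Z zstar -> (forall w, Z w -> dotp (g zstar) (zstar - w) <= 0) ->
  0 < nu -> 0 < alpha -> 0 <= eps ->
  (forall w v, Z w -> Z v ->
     dotp (g w - g v) (w - v) >= nu * dotp (gr w - gr v) (w - v)) ->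
  Z (z 0%N) -> (forall w, Z w -> r (z 0%N) <= r w) ->
  (forall k, (1 <= k <= K)%N ->
     [/\ Z (zh k), Z (z k),
       (forall w, Z w ->
          dotp (g (z k.-1) + alpha *: (gr (zh k) - gr (z k.-1))) (zh k - w)
            <= eps / 2),
       (forall w, Z w ->
          dotp (g (zh k) + alpha *: (gr (z k) - gr (z k.-1))
                 + nu *: (gr (z k) - gr (zh k))) (z k - w) <= eps / 2) &
       dotp (g (zh k) - g (z k.-1)) (zh k - z k)
         <= alpha * (breg r gr (zh k) (z k) + breg r gr (z k.-1) (zh k))]) ->
  breg r gr (z K) zstar <= (alpha / (nu + alpha)) ^+ K * Theta + eps / nu.
Proof.
move=> Zne Zc Zcv Hcv Hg HTh Zs Hvi nu0 al0 eps0 Hmon Z0 Hmin Hit.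
have key : forall k, (k <= K)%N ->
    breg r gr (z k) zstar <= (alpha / (nu + alpha)) ^+ k * Theta + eps / nu.
  elim=> [_|k IH HkK].
  - rewrite expr0 mul1r.
    have H1 := opt_ge0 Zcv Hg Z0 Hmin Zs.
    have H2 := HTh _ _ Zs Z0.
    have H3 : 0 <= eps / nu by rewrite divr_ge0 // ltW.
    rewrite /breg; lra.
  - have Zk : Z (z k).
      case: k IH HkK => [|k'] _ HkK //.
      by have [] := Hit k'.+1 (ltnW HkK).
    have Hk1 : (1 <= k.+1 <= K)%N by rewrite HkK.
    have [Zh Zb Ha Hb Hl] := Hit _ Hk1.
    rewrite /= in Ha Hb Hl.
    have IHk := IH (ltnW HkK).
    have St := step_ineq (Ha _ Zb) (Hb _ Zs) Hl (Hmon _ _ Zh Zs) (Hvi _ Zh)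
      (mulr_ge0 (ltW nu0) (breg_ge0 Hcv Hg Zs Zh))
      (mulr_ge0 (ltW nu0) (breg_ge0 Hcv Hg Zh Zb)).
    set P := (alpha / (nu + alpha)) ^+ k * Theta in IHk.
    rewrite exprS -mulrA -/P.
    set e' := eps / nu in IHk *.
    have He : eps = nu * e' by rewrite /e' mulrC mulfVK ?gt_eqF.
    have Hpos : 0 < alpha + nu by lra.
    rewrite -(ler_pM2l Hpos).
    have -> : (alpha + nu) * (alpha / (nu + alpha) * P + e') = alpha * P + (alpha + nu) * e'.
      by field; lra.
    have := ler_wpM2l (ltW al0) IHk.
    lra.
exact: key.
Qed.
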